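(* Let $\Gamma=(V,E)$ be a simple graph of order $n$ and let $\mu$ be the algebraic connectivity of $\Gamma$. Then the defensive alliance number of $\Gamma$ satisfies $$a(\Gamma)\ge \left\lceil\frac{n\mu}{n+\mu}\right\rceil$$ and the strong defensive alliance number of $\Gamma$ satisfies $$\hat{a}(\Gamma)\ge \left\lceil\frac{n(\mu+1)}{n+\mu}\right\rceil.$$
   Context: For $S\subseteq V$ and $v\in V$, $N_S(v)=\{u\in S: u\sim v\}$ and $N_{V\setminus S}(v)=\{u\in V\setminus S: u\sim v\}$. A nonempty set $S\subseteq V$ is a defensive alliance if $|N_S(v)|+1\ge |N_{V\setminus S}(v)|$ for every $v\in S$; it is a strong defensive alliance if $|N_S(v)|\ge |N_{V\setminus S}(v)|$ for every $v\in S$. $a(\Gamma)$ (resp. $\hat a(\Gamma)$) is the minimum cardinality of a defensive (resp. strong defensive) alliance in $\Gamma$. The algebraic connectivity is the second smallest eigenvalue of the Laplacian matrix of $\Gamma$. *)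

(* Defs.v *)
From HB Require Import structures.
From mathcomp Require Import all_boot all_order all_algebra.
From mathcomp Require Import reals.
Set Implicit Arguments. Unset Strict Implicit. Unset Printing Implicit Defensive.
Import Order.TTheory GRing.Theory Num.Theory.
Local Open Scope ring_scope.

Definition simple_graph (V : finType) (e : rel V) : Prop :=
  symmetric e /\ irreflexive e.

Definition nbhd_in (V : finType) (e : rel V) (S : {set V}) (v : V) : {set V} :=
  [set u in S | e u v].

Definition deg (V : finType) (e : rel V) (v : V) : nat := #|nbhd_in e [set: V] v|.

Definition defensive_alliance (V : finType) (e : rel V) (S : {set V}) : bool :=
  (S != set0) &&
  [forall v in S, #|nbhd_in e (~: S) v| <= #|nbhd_in e S v| + 1]%N.

Definition strong_defensive_alliance (V : finType) (e : rel V) (S : {set V}) : bool :=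
  (S != set0) &&
  [forall v in S, #|nbhd_in e (~: S) v| <= #|nbhd_in e S v|]%N.

(* minimum cardinality of a (strong) defensive alliance; V itself is always one
   when V is nonempty, so the default value #|V| never exceeds the true minimum. *)
Definition alliance_number (V : finType) (e : rel V) : nat :=
  \big[minn/#|V|]_(S : {set V} | defensive_alliance e S) #|S|.

Definition strong_alliance_number (V : finType) (e : rel V) : nat :=
  \big[minn/#|V|]_(S : {set V} | strong_defensive_alliance e S) #|S|.

Definition laplacian (R : nzRingType) (V : finType) (e : rel V) : 'M[R]_#|V| :=
  \matrix_(i, j) (if i == j then (deg e (enum_val i))%:R
                  else - (e (enum_val i) (enum_val j))%:R).

(* mu is the second smallest eigenvalue (with multiplicity) of the Laplacian:
   the eigenvalues, listed in nondecreasing order as s (so that the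
   characteristic polynomial is prod_(x <- s) (X - x)), have s_1 = mu. *)
Definition algebraic_connectivity (R : realType) (V : finType) (e : rel V) (mu : R) : Prop :=
  exists s : seq R,
    [/\ sorted <=%R s,
        char_poly (laplacian R e) = \prod_(x <- s) ('X - x%:P)
      & nth 0 s 1 = mu].

(* Main.v *)
Require Import Defs.
From HB Require Import structures.
From mathcomp Require Import all_boot all_order all_algebra.
From mathcomp Require Import reals.
From mathcomp Require Import complex ring lra.
Import Order.TTheory GRing.Theory Num.Theory.
Local Open Scope ring_scope.

Section Spectral_part.
Local Open Scope sesquilinear_scope.
Lemma conjR (R : realType) (x : R) : ((x%:C)%C : R[i])^* = (x%:C)%C.
Proof.
apply: conj_Creal. rewrite realE.
have [h|h] := leP 0 x.
  by rewrite -[0 : R[i]]/((0 : R)%:C)%C lecR h.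
by rewrite orbC -[0 : R[i]]/((0 : R)%:C)%C lecR ltW.
Qed.

Lemma tstar_real (R : realType) m n (M : 'M[R]_(m, n)) :
  (map_mx (real_complex R) M) ^t* = map_mx (real_complex R) M^T.
Proof. by apply/matrixP => i j; rewrite !mxE conjR. Qed.
Lemma char_poly_conj (F : fieldType) n (P D : 'M[F]_n) :
  P \in unitmx -> char_poly (invmx P *m D *m P) = char_poly D.
Proof.
move=> Pu; rewrite /char_poly /char_poly_mx.
have -> : 'X%:M - map_mx polyC (invmx P *m D *m P) =
   map_mx polyC (invmx P) *m ('X%:M - map_mx polyC D) *m map_mx polyC P.
  rewrite mulmxBr mulmxBl !map_mxM; congr (_ - _).
  rewrite scalar_mxC -mulmxA -map_mxM mulVmx // map_mx1 mulmx1.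
  by [].
rewrite !det_mulmx !det_map_mx mulrC mulrA -rmorphM -det_mulmx mulmxV //.
by rewrite det1 rmorph1 mul1r.
Qed.

Lemma core (C : numClosedFieldType) N (A : 'M[C]_N) (s : seq C) (mu : C)
    (w : 'rV[C]_N) :
  A ^t* = A ->
  char_poly A = \prod_(x <- s) ('X - x%:P) ->
  (count (fun x => ~~ (mu <= x)%R) s <= 1)%N ->
  0 < mu -> w *m A = 0 -> w != 0 ->
  forall x : 'rV[C]_N, (x *m w ^t*) 0 0 = 0 ->
  mu * (x *m x ^t*) 0 0 <= (x *m A *m x ^t*) 0 0.
Proof.
move=> hA hchar hcount mu_gt0 wA w0 x xw.
have An : A \is normalmx by apply/normalmxP; rewrite hA.
have AE : A = invmx (spectralmx A) *m diag_mx (spectral_diag A) *m spectralmx A.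
  exact: (elimT (@orthomx_spectralP C N A) An).
set U := spectralmx A in AE *; set d := spectral_diag A in AE *.
have Uu : U \is unitarymx := spectral_unitarymx A.
have Uunit : U \in unitmx := spectral_unit A.
have UUt : U *m U^t* = 1%:M := elimT unitarymxP Uu.
have UiE : invmx U = U^t* := invmx_unitary Uu.
have UtU : U^t* *m U = 1%:M by rewrite -UiE mulVmx.
have hp : perm_eq [seq d 0 i | i <- enum 'I_N] s.
  apply/allP => c _ /=; apply/eqP; rewrite -!mu_prod_XsubC -hchar AE.
  rewrite char_poly_conj // char_poly_trig ?diag_mx_is_trig //.
  rewrite big_map big_enum /=; congr (mup _ _); apply: eq_bigr => i _.
  by rewrite mxE eqxx mulr1n.
have two : forall i j : 'I_N, i != j -> ~~ (mu <= d 0 i) -> mu <= d 0 j.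
  move=> i j ij hi; apply/negPn/negP => hj.
  move: hcount; rewrite -(permP hp) count_map.
  have := perm_to_rem (mem_enum (mem 'I_N) i).
  move=> /permP ->; rewrite /= hi add1n ltnS leqn0.
  apply/negP; rewrite -lt0n -has_count.
  apply/hasP; exists j => //.
  by rewrite mem_rem_uniq ?enum_uniq // inE eq_sym ij mem_enum.
rewrite UiE in AE.
set y := x *m U^t*.
have Q1 : x *m A *m x^t* = y *m diag_mx d *m y^t*.
  by rewrite AE /y trmx_mul map_mxM trmxCK !mulmxA.
have Q2 : x *m x^t* = y *m y^t*.
  by rewrite /y trmx_mul map_mxM trmxCK mulmxA -(mulmxA x) UtU mulmx1.
set y' := w *m U^t*.
have Q3 : x *m w^t* = y *m y'^t*.
  by rewrite /y' /y trmx_mul map_mxM trmxCK mulmxA -(mulmxA x) UtU mulmx1.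
have Wd : y' *m diag_mx d = 0.
  have := congr1 (fun M => M *m U^t*) wA; rewrite /= AE mul0mx !mulmxA.
  by rewrite -(mulmxA _ U) UUt mulmx1.
have y'0 : y' != 0.
  apply: contra w0 => /eqP h.
  have -> : w = y' *m U by rewrite /y' -mulmxA UtU mulmx1.
  by rewrite h mul0mx.
rewrite Q1 Q2; rewrite Q3 in xw.
clearbody y y'.
rewrite mul_mx_diag !mxE mulr_sumr -subr_ge0 -sumrB; apply: sumr_ge0 => i _.
rewrite !mxE.
have -> : y 0 i * d 0 i * (y 0 i)^* - mu * (y 0 i * (y 0 i)^*) =
          (d 0 i - mu) * (y 0 i * (y 0 i)^*).
  by ring.
case: (boolP (mu <= d 0 i)) => h.
  by rewrite mulr_ge0 ?subr_ge0 // mul_conjC_ge0.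
have yj : forall j, j != i -> y' 0 j = 0.
  move=> j ji; have := congr1 (fun M : 'M[C]_(1, N) => M 0 j) Wd.
  rewrite /= mul_mx_diag !mxE => /eqP; rewrite mulf_eq0 => /orP[/eqP //|].
  have ij : i != j by rewrite eq_sym.
  have := two i j ij h.
  by move=> hj /eqP d0; rewrite d0 in hj; have := lt_le_trans mu_gt0 hj; rewrite ltxx.
have y'i : y' 0 i != 0.
  apply: contra y'0 => /eqP h0; apply/eqP/rowP => j; rewrite mxE.
  by case: (eqVneq j i) => [->|/yj].
have yi : y 0 i = 0.
  move: xw; rewrite !mxE (bigD1 i) //= big1 ?addr0.
    by rewrite !mxE => /eqP; rewrite mulf_eq0 conjC_eq0 (negPf y'i) orbF => /eqP.
  by move=> j ji; rewrite !mxE yj // conjC0 mulr0.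
by rewrite yi mul0r mulr0.
Qed.

Lemma rayleigh_real (R : realType) N (A : 'M[R]_N) (s : seq R) (mu : R)
    (w : 'rV[R]_N) :
  A^T = A ->
  char_poly A = \prod_(x <- s) ('X - x%:P) ->
  (count (fun x => ~~ (mu <= x)%R) s <= 1)%N ->
  0 < mu -> w *m A = 0 -> w != 0 ->
  forall x : 'rV[R]_N, (x *m w^T) 0 0 = 0 ->
  mu * (x *m x^T) 0 0 <= (x *m A *m x^T) 0 0.
Proof.
move=> hA hchar hcount mu_gt0 wA w0 x xw.
pose f := real_complex R.
have H := @core _ N (map_mx f A) (map f s) (f mu) (map_mx f w).
have := H _ _ _ _ _ _ (map_mx f x).
rewrite /f !tstar_real hA -!map_mxM !mxE -rmorphM lecR; apply => //.
- rewrite -map_char_poly hchar rmorph_prod big_map; apply: eq_bigr => y _.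
  by rewrite /= map_polyXsubC.
- by rewrite count_map; under eq_count do rewrite /= lecR.
- by rewrite ltcR.
- by rewrite wA map_mx0.
- by rewrite map_mx_eq0.
- by move: xw; rewrite mxE => ->.
Qed.

End Spectral_part.

Section Graph.
Variables (R : realType) (V : finType) (e : rel V).
Hypothesis esym : symmetric e.
Hypothesis eirr : irreflexive e.

Lemma sumV (F : V -> R) : \sum_(i < #|V|) F (enum_val i) = \sum_v F v.
Proof.
rewrite [RHS](reindex (@enum_val V predT)) //.
by exists enum_rank => i _; [apply: enum_valK | apply: enum_rankK].
Qed.

Lemma cardR (A : {set V}) : (#|A|)%:R = \sum_u ((u \in A)%:R : R).
Proof.
rewrite -sum1_card natr_sum big_mkcond /=; apply: eq_bigr => u _.
by case: (u \in A).
Qed.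

Lemma degR v : (deg e v)%:R = \sum_u ((e v u)%:R : R).
Proof.
rewrite /deg /nbhd_in cardR; apply: eq_bigr => u _.
by rewrite !inE esym.
Qed.

Definition Lv (u v : V) : R := (u == v)%:R * (deg e v)%:R - (e u v)%:R.

Lemma lapE i j : laplacian R e i j = Lv (enum_val i) (enum_val j).
Proof.
rewrite /laplacian /Lv mxE (inj_eq enum_val_inj).
case: eqP => [->|_]; first by rewrite eirr mul1r subr0.
by rewrite mul0r sub0r.
Qed.

Definition qf (f : V -> R) := \sum_u f u * \sum_v (e u v)%:R * (f u - f v).

Lemma lap_quad (f : V -> R) :
  let x := \row_i f (enum_val i) in
  (x *m laplacian R e *m x^T) 0 0 = qf f.
Proof.
move=> x; rewrite /x mxE.
under eq_bigr => i _ do (rewrite !mxE; under eq_bigr => j _ do rewrite lapE !mxE).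
rewrite (sumV (fun v => (\sum_j f (enum_val j) * Lv (enum_val j) v) * f v)).
rewrite /qf; apply: eq_bigr => v _.
rewrite (sumV (fun u => f u * Lv u v)) mulrC; congr (_ * _).
rewrite /Lv.
under eq_bigr do rewrite mulrBr.
rewrite sumrB (bigD1 v) //= eqxx mul1r big1 ?addr0; last first.
  by move=> u /negPf ->; rewrite mul0r mulr0.
rewrite degR mulr_sumr -sumrB; apply: eq_bigr => u _.
by rewrite esym; ring.
Qed.

Lemma qf2 (f : V -> R) : 2 * qf f = \sum_u \sum_v (e u v)%:R * (f u - f v) ^+ 2.
Proof.
have E : qf f = \sum_u \sum_v f u * ((e u v)%:R * (f u - f v)).
  by rewrite /qf; apply: eq_bigr => u _; rewrite mulr_sumr.
rewrite mulr2n mulrDl mul1r E [X in _ + X]exchange_big /=.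
rewrite -big_split /=; apply: eq_bigr => u _.
rewrite -big_split /=; apply: eq_bigr => v _.
rewrite esym; ring.
Qed.

Lemma qf_ge0 f : 0 <= qf f.
Proof.
have : 0 <= 2 * qf f.
  rewrite qf2; apply: sumr_ge0 => u _; apply: sumr_ge0 => v _.
  by rewrite mulr_ge0 ?ler0n ?sqr_ge0.
by rewrite pmulr_rge0.
Qed.


Definition dS (S : {set V}) : nat := \sum_(u in S) #|nbhd_in e (~: S) u|.

Section Test.
Variable S : {set V}.
Let n : R := (#|V|)%:R.
Let sR : R := (#|S|)%:R.
Let chi (u : V) : R := (u \in S)%:R.
Definition tf (u : V) : R := n * chi u - sR.

Lemma sum_chi : \sum_u chi u = sR.
Proof. by rewrite /sR cardR. Qed.

Lemma sum_const (c : R) : \sum_(u : V) c = c * n.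
Proof. by rewrite sumr_const -mulr_natr. Qed.

Lemma sum_tf : \sum_u tf u = 0.
Proof.
rewrite /tf sumrB -mulr_sumr sum_chi sum_const.
by rewrite mulrC subrr.
Qed.

Lemma sum_tf2 : \sum_u tf u ^+ 2 = n * sR * (n - sR).
Proof.
have E : forall u, tf u ^+ 2 = (n ^+ 2 - 2 * n * sR) * chi u + sR ^+ 2.
  move=> u; rewrite /tf /chi; case: (u \in S) => /=; ring.
under eq_bigr do rewrite E.
rewrite big_split /= -mulr_sumr sum_chi sum_const.
ring.
Qed.

Lemma qf_tf : qf tf = n ^+ 2 * (dS S)%:R.
Proof.
have E : forall u v, (e u v)%:R * (tf u - tf v) ^+ 2 =
    n ^+ 2 * ((e u v)%:R * (chi u * (1 - chi v))) +
    n ^+ 2 * ((e v u)%:R * (chi v * (1 - chi u))).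
  move=> u v; rewrite /tf /chi esym.
  by case: (u \in S); case: (v \in S); case: (e v u) => /=; ring.
have : 2 * qf tf = 2 * (n ^+ 2 * (dS S)%:R).
  rewrite qf2.
  under eq_bigr do under eq_bigr do rewrite E.
  under eq_bigr do rewrite big_split /=.
  rewrite big_split /= [X in _ + X]exchange_big /= -mulr2n mulr_natl.
  congr (_ *+ 2); under eq_bigr do rewrite -mulr_sumr.
  rewrite -mulr_sumr; congr (_ * _).
  rewrite /dS natr_sum [RHS]big_mkcond /=; apply: eq_bigr => u _.
  rewrite /chi; case: (u \in S) => /=; last first.
    by rewrite big1 // => v _; rewrite !mul0r mulr0.
  rewrite cardR; apply: eq_bigr => v _.
  by rewrite !inE esym; case: (v \in S); case: (e u v) => /=; ring.
by move/(mulfI (lt0r_neq0 (ltr0Sn R 1))). 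
Qed.

End Test.


Lemma lap_sym : (laplacian R e)^T = laplacian R e.
Proof.
apply/matrixP => i j; rewrite mxE !lapE /Lv.
case: (eqVneq (enum_val j) (enum_val i)) => [->//|h].
by rewrite !mul0r esym.
Qed.

Lemma row_quad (f g : V -> R) :
  ((\row_(i < #|V|) f (enum_val i)) *m (\row_(i < #|V|) g (enum_val i))^T) 0 0 = \sum_u f u * g u.
Proof.
rewrite mxE; under eq_bigr do rewrite !mxE.
exact: (sumV (fun u => f u * g u)).
Qed.

Lemma ones_lap : (\row_(i < #|V|) (1 : R)) *m laplacian R e = 0.
Proof.
apply/rowP => j; rewrite [RHS]mxE mxE.
under eq_bigr do rewrite lapE !mxE mul1r.
rewrite (sumV (fun u => Lv u (enum_val j))) /Lv sumrB (bigD1 (enum_val j)) //=.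
rewrite eqxx mul1r big1 ?addr0; last by move=> u /negPf->; rewrite mul0r.
by rewrite degR; under eq_bigr do rewrite esym; rewrite subrr.
Qed.

Lemma root_ge0 a : root (char_poly (laplacian R e)) a -> 0 <= a.
Proof.
rewrite -eigenvalue_root_char => /eigenvalueP [v hv v0].
pose f u := v 0 (enum_rank u).
have xv : \row_i f (enum_val i) = v by apply/rowP => i; rewrite mxE /f enum_valK.
have Q := lap_quad f; rewrite /= xv hv -scalemxAl mxE in Q.
have P : 0 < (v *m v^T) 0 0.
  rewrite -xv row_quad lt0r; apply/andP; split; last first.
    by apply: sumr_ge0 => u _; rewrite -expr2 sqr_ge0.
  apply/negP; rewrite psumr_eq0 => [/allP h|u _]; last first.
    by rewrite -expr2 sqr_ge0.
  apply: (negP v0); apply/eqP/rowP => i; have := h (enum_val i); rewrite mem_index_enum.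
  by rewrite /f enum_valK mulf_eq0 orbb mxE => /(_ isT)/eqP.
by rewrite -(pmulr_lge0 _ P) Q qf_ge0.
Qed.

Lemma key (s : seq R) (mu : R) (S : {set V}) :
  char_poly (laplacian R e) = \prod_(x <- s) ('X - x%:P) ->
  (count (fun x => ~~ (mu <= x)%R) s <= 1)%N -> 0 <= mu -> (0 < #|V|)%N ->
  mu * ((#|V|)%:R * (#|S|)%:R * ((#|V|)%:R - (#|S|)%:R)) <=
  (#|V|)%:R ^+ 2 * (dS S)%:R.
Proof.
move=> hchar hcount mu0 V0.
rewrite -sum_tf2 -qf_tf.
have [->|mun0] := eqVneq mu 0; first by rewrite mul0r qf_ge0.
have mup : 0 < mu by rewrite lt0r mun0.
have w0 : (\row_(i < #|V|) (1 : R)) != 0.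
  apply/eqP => /rowP /(_ (Ordinal V0)); rewrite !mxE => /eqP.
  by rewrite oner_eq0.
have := @rayleigh_real _ _ _ _ _ _ lap_sym hchar hcount mup ones_lap w0
  (\row_(i < #|V|) tf S (enum_val i)).
rewrite (row_quad (tf S) (fun _ => 1)) row_quad lap_quad.
under eq_bigr do rewrite mulr1.
rewrite sum_tf => /(_ erefl).
by under eq_bigr do rewrite -expr2.
Qed.

Lemma dS_setT : dS [set: V] = 0%N.
Proof.
rewrite /dS big1 // => u _; apply/eqP; rewrite cards_eq0; apply/eqP/setP => v.
by rewrite !inE.
Qed.

Lemma nbS_lt (S : {set V}) u : u \in S -> (#|nbhd_in e S u| < #|S|)%N.
Proof.
move=> uS; apply: proper_card; rewrite properE; apply/andP; split.
  by apply/subsetP => v; rewrite inE => /andP[].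
by apply/subsetPn; exists u => //; rewrite inE uS eirr.
Qed.

Lemma dS_alliance S : defensive_alliance e S -> (dS S <= #|S| * #|S|)%N.
Proof.
move=> /andP [_ /forallP h]; rewrite /dS -sum_nat_const; apply: leq_sum => u uS.
have := h u; rewrite uS /= => hu; apply: leq_trans hu _.
by rewrite addn1; apply: nbS_lt.
Qed.

Lemma dS_strong S : strong_defensive_alliance e S -> (dS S + #|S| <= #|S| * #|S|)%N.
Proof.
move=> /andP [_ /forallP h]; rewrite /dS -sum_nat_const.
rewrite -[X in (_ + X <= _)%N]sum1_card -big_split /=; apply: leq_sum => u uS.
have := h u; rewrite uS /= => hu; rewrite addn1; apply: leq_ltn_trans hu _.
exact: nbS_lt.
Qed.

End Graph.

Lemma arith1 (R : realType) (n mu s d : R) : 0 < n -> 0 < s -> 0 <= mu ->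
  mu * (n * s * (n - s)) <= n ^+ 2 * d -> d <= s * s -> n * mu / (n + mu) <= s.
Proof.
move=> n0 s0 mu0 h hd.
have nmu : 0 < n + mu by lra.
rewrite ler_pdivrMr //.
have ns : 0 < n * s by rewrite mulr_gt0.
have h2 : mu * (n * s * (n - s)) <= n ^+ 2 * (s * s).
  apply: le_trans h _; rewrite ler_pM2l // exprn_gt0 //.
nra.
Qed.

Lemma arith2 (R : realType) (n mu s d : R) : 0 < n -> 0 < s -> 0 <= mu ->
  mu * (n * s * (n - s)) <= n ^+ 2 * d -> d + s <= s * s ->
  n * (mu + 1) / (n + mu) <= s.
Proof.
move=> n0 s0 mu0 h hd.
have nmu : 0 < n + mu by lra.
rewrite ler_pdivrMr //.
have ns : 0 < n * s by rewrite mulr_gt0.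
have h2 : mu * (n * s * (n - s)) <= n ^+ 2 * (s * s - s).
  apply: le_trans h _; rewrite ler_pM2l ?exprn_gt0 //; lra.
nra.
Qed.

Lemma bigmin_ge (T : finType) (P : pred T) (F : T -> nat) (m : nat) (c : int) :
  (c <= m%:Z)%R -> (forall i, P i -> (c <= (F i)%:Z)%R) ->
  (c <= (\big[minn/m]_(i | P i) F i)%:Z)%R.
Proof.
move=> hm hF; apply: (big_ind (fun k : nat => c <= k%:Z)) => // a b ha hb.
by rewrite /minn; case: ltnP.
Qed.

Theorem theorem1 (R : realType) (V : finType) (e : rel V) (mu : R) :
  simple_graph e -> (1 < #|V|)%N -> algebraic_connectivity e mu ->
  let n : R := (#|V|)%:R in
  (Num.ceil (n * mu / (n + mu)) <= (alliance_number e)%:Z)%R /\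
  (Num.ceil (n * (mu + 1) / (n + mu)) <= (strong_alliance_number e)%:Z)%R.
Proof.
move=> [esym eirr] V2 [s [ss hchar hmu]] n.
have V0 : (0 < #|V|)%N by apply: ltnW.
have hsize : size s = #|V|.
  have := size_char_poly (laplacian R e); rewrite hchar size_prod_XsubC.
  by move=> [].
case: s ss hchar hmu hsize => [|a [|b t]];
  try by move=> _ _ _ /= hs; rewrite -hs in V2.
move=> ss hchar /= hmu hsize; subst b.
have mu0 : 0 <= mu.
  apply: (@root_ge0 R V e esym eirr); rewrite hchar root_prod_XsubC.
  by rewrite in_cons mem_head orbT.
have hcount : (count (fun x => ~~ (mu <= x)%R) [:: a, mu & t] <= 1)%N.
  move: ss => /= /andP [_ /(order_path_min le_trans) hall].
  rewrite lexx /= add0n.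
  suff -> : count (fun x => ~~ (mu <= x)) t = 0%N by case: (~~ _).
  by elim: t hall {hchar hsize} => //= y t IH /andP [-> /IH ->].
have n0 : 0 < n by rewrite ltr0n.
have per : forall S : {set V}, (0 < #|S|)%N ->
    mu * (n * (#|S|)%:R * (n - (#|S|)%:R)) <= n ^+ 2 * (dS V e S)%:R.
  by move=> S _; apply: (@key R V e esym eirr _ _ S hchar hcount mu0 V0).
have sT : (0 < #|[set: V]|)%N by rewrite cardsT.
split; apply: bigmin_ge.
- rewrite ceil_le_int -cardsT; apply: (@arith1 R _ _ _ _ n0 _ mu0 (per _ sT)).
    by rewrite ltr0n.
  by rewrite (dS_setT V e) -natrM ler_nat.
- move=> S /[dup] /andP [S0 _] /(@dS_alliance V e eirr) hd.
  have Sp : (0 < #|S|)%N by rewrite card_gt0.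
  rewrite ceil_le_int; apply: (@arith1 R _ _ _ _ n0 _ mu0 (per _ Sp)); first by rewrite ltr0n.
  by rewrite -natrM ler_nat.
- rewrite ceil_le_int -cardsT; apply: (@arith2 R _ _ _ _ n0 _ mu0 (per _ sT)).
    by rewrite ltr0n.
  by rewrite (dS_setT V e) add0r -natrM ler_nat cardsT leq_pmull.
- move=> S /[dup] /andP [S0 _] /(@dS_strong V e eirr) hd.
  have Sp : (0 < #|S|)%N by rewrite card_gt0.
  rewrite ceil_le_int; apply: (@arith2 R _ _ _ _ n0 _ mu0 (per _ Sp)); first by rewrite ltr0n.
  by rewrite -natrD -natrM ler_nat.
Qed.
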